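(* Let $\mathcal{S}$ be a set of triangles in a graph with $|\mathcal{S}|>1$ such that every two distinct triangles $t,t'\in\mathcal{S}$ satisfy $|E(t)\cap E(t')|=1$. Then either $|\bigcap_{t\in\mathcal{S}}E(t)|=1$, or $|\mathcal{S}|\leq 4$ and the vertex set $\bigcup_{t\in\mathcal{S}}V(t)$ induces a $K_4$.
   Context: A triangle is a set of three pairwise adjacent vertices of a simple graph; $V(t)$ and $E(t)$ denote its vertex set and its set of three edges. *)

(* Defs.v *)
From mathcomp Require Import all_boot.
Set Implicit Arguments. Unset Strict Implicit. Unset Printing Implicit Defensive.

Definition simple_graph (T : finType) (g : rel T) : Prop :=
  symmetric g /\ irreflexive g.

Definition is_triangle (T : finType) (g : rel T) (t : {set T}) : bool :=
  (#|t| == 3) && [forall x in t, forall y in t, (x != y) ==> g x y].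

(* V(t) = t; E(t) = its three edges = the 2-element subsets of t. *)
Definition tri_edges (T : finType) (t : {set T}) : {set {set T}} :=
  [set f : {set T} | (f \subset t) && (#|f| == 2)].

Definition induces_K4 (T : finType) (g : rel T) (X : {set T}) : Prop :=
  #|X| = 4 /\ {in X &, forall x y, x != y -> g x y}.

(* Main.v *)
Require Import Defs.
From mathcomp Require Import all_boot.
From mathcomp Require Import zify.

Lemma card_IU (T : finType) (t A B : {set T}) :
  #|t :&: A| + #|t :&: B| <= #|t :&: (A :|: B)| + #|t :&: (A :&: B)|.
Proof.
rewrite setIUr cardsU.
have h1 : #|(t :&: A) :&: (t :&: B)| <= #|t :&: (A :&: B)|.
  by apply: subset_leq_card; apply/subsetP => z; rewrite !inE => /andP[/andP[-> ->] /andP[_ ->]].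
have h2 : #|(t :&: A) :&: (t :&: B)| <= #|t :&: A| by apply: subset_leq_card; apply: subsetIl.
lia.
Qed.

Theorem claim22 (T : finType) (g : rel T) (S : {set {set T}}) :
  simple_graph g ->
  {in S, forall t, is_triangle g t} ->
  1 < #|S| ->
  {in S &, forall t t', t != t' -> #|tri_edges t :&: tri_edges t'| = 1} ->
  #|\bigcap_(t in S) tri_edges t| = 1 \/
  (#|S| <= 4 /\ induces_K4 g (\bigcup_(t in S) t)).
Proof.
move=> [gsym girr] tri card2 inter.
have tri3 t : t \in S -> #|t| = 3.
  by move=> /tri /andP[/eqP].
have triE t x y : t \in S -> x \in t -> y \in t -> x != y -> g x y.
  move=> /tri /andP[_ /forall_inP H] xt yt nxy.
  by have /forall_inP H2 := H x xt; move: (H2 y yt) => /implyP; apply.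
have I2 t t' : t \in S -> t' \in S -> t != t' -> #|t :&: t'| = 2.
  move=> Ht Ht' ne.
  have h := inter t t' Ht Ht' ne.
  have : tri_edges t :&: tri_edges t' != set0 by rewrite -card_gt0 h.
  case/set0Pn => f; rewrite !inE => /andP[/andP[ft f2] /andP[ft' _]].
  have h1 : #|f| <= #|t :&: t'| by apply: subset_leq_card; rewrite subsetI ft ft'.
  have le3 : #|t :&: t'| <= 3 by rewrite -(tri3 t Ht); apply: subset_leq_card; apply: subsetIl.
  have ne3 : #|t :&: t'| != 3.
    apply/negP => /eqP h3; move/negP: ne; apply.
    have : t :&: t' == t by rewrite eqEcard subsetIl h3 tri3.
    move/eqP/setIidPl => tt'.
    by rewrite eqEcard tt' !tri3.
  move/eqP: f2 => f2; lia.
case/card_gt1P: card2 => t1 [t2 [H1 H2 n12]].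
set e := t1 :&: t2.
have He2 : #|e| = 2 by apply: I2.
have eT1 : e \subset t1 by apply: subsetIl.
have eT2 : e \subset t2 by apply: subsetIr.
case: (boolP [forall t in S, e \subset t]) => [/forall_inP allE | ].
  left; apply/eqP/cards1P; exists e; apply/setP => f; rewrite in_set1.
  apply/bigcapP/eqP.
    move=> Hf.
    have /eqP := inter t1 t2 H1 H2 n12; case/cards1P => x Hx.
    have fx : f \in tri_edges t1 :&: tri_edges t2 by rewrite inE !Hf.
    have ex : e \in tri_edges t1 :&: tri_edges t2 by rewrite !inE eT1 eT2 He2.
    by move: fx ex; rewrite Hx !in_set1 => /eqP -> /eqP ->.
  by move=> -> t Ht; rewrite inE allE // He2 eqxx.
rewrite negb_forall_in => /exists_inP [t3 H3 ne3].
have e3 : #|t3 :&: e| <= 1.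
  have : #|t3 :&: e| <= #|e| by apply: subset_leq_card; apply: subsetIr.
  have : (t3 :&: e == e) = false.
    apply/negP => /eqP /setIidPr; by apply/negP.
  rewrite eqEcard subsetIr /= => /negbT; rewrite -ltnNge; lia.
set U := t1 :|: t2.
have HU : #|U| = 4 by rewrite /U cardsU -/e He2 !tri3.
have subU t : t \in S -> 3 <= #|t :&: U| -> t \subset U.
  move=> Ht h; apply/setIidPl/eqP; rewrite eqEcard subsetIl tri3 //.
have noE t : t \in S -> ~~ (e \subset t) -> t \subset U.
  move=> Ht ne; apply: subU => //.
  have n1 : t != t1 by apply: contraNneq ne => ->.
  have n2 : t != t2 by apply: contraNneq ne => ->.
  have := @card_IU _ t t1 t2.
  rewrite (I2 t t1) // (I2 t t2) // -/e.
  have : #|t :&: e| <= #|e| by apply: subset_leq_card; apply: subsetIr.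
  have : (t :&: e == e) = false.
    apply/negP => /eqP /setIidPr; by apply/negP.
  rewrite eqEcard subsetIr /= => /negbT; rewrite -ltnNge; move=> a b c; rewrite -/U in c; lia.
have t3U := noE t3 H3 ne3.
have allU t : t \in S -> t \subset U.
  move=> Ht; case: (boolP (e \subset t)) => [eT|]; last exact: noE.
  case: (eqVneq t t3) => [->|nt3] //; apply: subU => //.
  have := @card_IU _ t e t3.
  have -> : #|t :&: e| = 2 by move/setIidPr: eT => ->.
  rewrite (I2 t t3) //.
  have : #|t :&: (e :&: t3)| <= #|t3 :&: e|.
    by apply: subset_leq_card; rewrite setIC (setIC e); apply: subsetIl.
  have : #|t :&: (e :|: t3)| <= #|t :&: U|.
    by apply: subset_leq_card; apply: setIS; rewrite subUset t3U (subset_trans eT1) // subsetUl.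
  lia.
have Uunion : \bigcup_(t in S) t = U.
  apply/eqP; rewrite eqEsubset; apply/andP; split.
    by apply/bigcupsP => t; apply: allU.
  by rewrite subUset !(bigcup_sup _ H1, bigcup_sup _ H2).
right; split.
  have inj : {in S &, injective (fun t => U :\: t)}.
    move=> a b Ha Hb /= Hab.
    have dd (t : {set T}) : t \subset U -> U :\: (U :\: t) = t.
      move=> /subsetP tU; apply/setP => z; rewrite !in_setD negb_and negbK.
      case zt: (z \in t); [by rewrite (tU z zt) | by case: (z \in U)].
    by rewrite -(dd a (allU a Ha)) -(dd b (allU b Hb)) Hab.
  rewrite -(card_in_imset inj).
  apply: (leq_trans _ (leq_trans (leq_imset_card (fun x => [set x]) U) _)); last by rewrite HU.
  apply: subset_leq_card; apply/subsetP => f /imsetP [t Ht ->].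
  have : #|U :\: t| == 1 by rewrite cardsD (setIidPr (allU t Ht)) HU tri3.
  case/cards1P => x Hx; apply/imsetP; exists x; last by rewrite Hx.
  have : x \in U :\: t by rewrite Hx set11.
  by rewrite in_setD => /andP[].
split; rewrite Uunion // => x y xU yU nxy.
have in3 z : z \in U -> z \notin e -> z \in t3.
  move=> zU ze; apply: contraNT ne3 => zt3.
  have sub : t3 \subset U :\ z by rewrite subsetD1 t3U zt3.
  have : #|U :\ z| = 3 by move: (cardsD1 z U); rewrite zU HU add1n => -[<-].
  move=> c3.
  have : t3 == U :\ z by rewrite eqEcard sub c3 tri3.
  by move/eqP => ->; rewrite subsetD1 ze (subset_trans eT1) // subsetUl.
have xe : x \in e -> g x y.
  rewrite inE => /andP[x1 x2]; move: yU; rewrite inE => /orP[y1|y2].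
    exact: (triE t1). exact: (triE t2).
case: (boolP (x \in e)) => [/xe //|xne].
case: (boolP (y \in e)) => [ye|yne].
  by rewrite gsym; move: ye; rewrite inE => /andP[y1 y2]; move: xU; rewrite inE => /orP[x1|x2];
    [apply: (triE t1) | apply: (triE t2)]; rewrite // eq_sym.
by apply: (triE t3) => //; apply: in3.
Qed.
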